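(* Let $P$ and $Q$ be probability measures on a measurable space $(\mathcal{X},\mathcal{A})$ with densities $f$ and $g$, respectively, with respect to a measure $\mu$ on $(\mathcal{X},\mathcal{A})$. Suppose that $g/f \le \rho$ for some number $\rho \in [1,\infty)$. (a) For any non-decreasing function $\psi : [0,\infty) \to \mathbb{R}$ with $\psi(1) = 0$, \[ \int \psi(g/f) \, dQ \ \le \ Q(\{g > f\}) \, \psi(\rho) . \] (b) For any convex function $\psi : [0,\infty) \to \mathbb{R}$, \[ \int \psi(g/f) \, dP \ \le \ \psi(0) + \frac{\psi(\rho) - \psi(0)}{\rho} . \] Both inequalities are equalities if $g/f$ takes only values in $\{0,\rho\}$.
   Context: Ratios use the conventions $0/0 := 0$ and $a/0 := \infty$ for $a > 0$. *)

(* Defs.v *)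
From HB Require Import structures.
From mathcomp Require Import all_boot all_order all_algebra.
From mathcomp Require Import all_classical all_reals all_analysis.
Set Implicit Arguments. Unset Strict Implicit. Unset Printing Implicit Defensive.
Import Order.TTheory GRing.Theory Num.Theory.
Local Open Scope ring_scope.

Definition dratio (R : realType) (a b : R) : \bar R :=
  if b == 0 then (if a == 0 then 0%E else +oo%E) else (a / b)%:E.

(* Main.v *)
Require Import Defs.
From HB Require Import structures.
From mathcomp Require Import all_boot all_order all_algebra.
From mathcomp Require Import all_classical all_reals all_analysis.
From mathcomp Require Import measurable_realfun lebesgue_measure lebesgue_integral.
From mathcomp Require Import ring lra.
Import Order.TTheory GRing.Theory Num.Theory.
Local Open Scope classical_set_scope.
Local Open Scope ring_scope.

Import HBNNSimple.
Lemma density_integral d (T : measurableType d) (R : realType)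
  (mu nu : {measure set T -> \bar R}) (g : T -> R) :
  measurable_fun setT g -> (forall x, 0 <= g x) ->
  (forall A, measurable A -> nu A = (\int[mu]_(x in A) (g x)%:E)%E) ->
  forall (f : T -> \bar R) E, (forall x, (0 <= f x)%E) ->
    measurable E -> measurable_fun E f ->
  (\int[mu]_(x in E) (f x * (g x)%:E) = \int[nu]_(x in E) f x)%E.
Proof.
move=> mg g0 f_integral f E f0 mE mf.
have mgE : measurable_fun E (EFin \o g).
  by apply/measurable_EFinP; exact: measurable_funTS.
pose h := nnsfun_approx mE mf.
have -> : (\int[nu]_(x in E) f x =
    lim (\int[nu]_(x in E) (EFin \o h n) x @[n --> \oo]))%E.
  have fE x : E x -> f x = lim ((EFin \o h n) x @[n --> \oo]).
    by move=> Ex; apply/esym/cvg_lim => //; exact: cvg_nnsfun_approx.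
  under eq_integral => x /[!inE] /fE -> //.
  apply: monotone_convergence => //.
  - move=> n; apply/measurable_EFinP.
    by apply: (measurable_funS measurableT) => //; exact/measurable_funP.
  - by move=> n x Ex //=; rewrite lee_fin.
  - by move=> x Ex a b ab; rewrite lee_fin; exact/lefP/nd_nnsfun_approx.
have -> : (\int[mu]_(x in E) (f x * (g x)%:E) =
    lim (\int[mu]_(x in E) ((EFin \o h n) x * (g x)%:E) @[n --> \oo]))%E.
  have fg x : E x -> (f x * (g x)%:E = lim (((EFin \o h n) x * (g x)%:E) @[n --> \oo]))%E.
    by move=> Ex; apply/esym/cvg_lim => //; apply: cvgeZr;
      [by []|exact: cvg_nnsfun_approx].
  under eq_integral => x /[!inE] /fg -> //.
  apply: monotone_convergence => [//| | |].
  - move=> n; apply/emeasurable_funM => //; apply/measurable_funTS.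
      exact/measurable_EFinP.
  - by move=> n x Ex /=; rewrite mule_ge0 ?lee_fin.
  - by move=> x Ex a b ab/=; rewrite lee_wpmul2r ?lee_fin//; exact/lefP/nd_nnsfun_approx.
suff suf n : (\int[mu]_(x in E) ((EFin \o h n) x * (g x)%:E) =
    \int[nu]_(x in E) (EFin \o h n) x)%E.
  by under eq_fun do rewrite suf.
transitivity (\int[nu]_(x in E)
   (\sum_(y \in range (h n)) (y * \1_(h n @^-1` [set y]) x)%:E))%E; last first.
  by apply: eq_integral => t tE; rewrite /= fimfunE -fsumEFin.
have indich m r : measurable_fun E (fun x => (r * \1_(h m @^-1` [set r]) x)%:E).
  by apply: (measurable_comp measurableT) => //; exact: measurable_funM.
rewrite ge0_integral_fsum//; last by move=> m y Ey; exact: nnfun_muleindic_ge0.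
transitivity (\int[mu]_(x in E) (\sum_(y \in range (h n))
    (y * \1_(h n @^-1` [set y]) x)%:E * (g x)%:E))%E.
  under [RHS]eq_integral => x xE.
    rewrite -ge0_mule_fsuml => [|y]; last exact: nnfun_muleindic_ge0.
    rewrite fsumEFin // -(fimfunE _ x); over.
  by [].
rewrite ge0_integral_fsum//; last 2 first.
  - move=> y; apply: emeasurable_funM => //.
  - by move=> m y Ey; apply: mule_ge0; [exact: nnfun_muleindic_ge0|rewrite lee_fin].
apply: eq_fsbigr => r rhn.
under [RHS]eq_integral do rewrite EFinM.
rewrite integralZl_indic_nnsfun => //.
under eq_integral do rewrite EFinM -muleA.
rewrite ge0_integralZl//.
- under eq_integral do rewrite muleC.
  rewrite (eq_integral ((EFin \o g) \_ (h n @^-1` [set r]))); last first.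
    by move=> x xE; rewrite epatch_indic.
  by rewrite -integral_mkcondr -f_integral// integral_indic// setIC.
- apply: emeasurable_funM => //; first exact/measurable_EFinP.
- by move=> t Et; rewrite mule_ge0 ?lee_fin.
- by move: rhn; rewrite inE => -[t _ <-]; rewrite lee_fin.
Qed.
Lemma sublevel_meas (R : realType) (D : set R) (psi : R -> R) : measurable D ->
  (forall a, is_interval (D `&` psi @^-1` `]-oo, a[)) -> measurable_fun D psi.
Proof.
move=> mD H.
apply: (measurability (@RGenInftyO.G R)) => [|/= _ [_] [r] -> <-].
  exact: RGenInftyO.measurableE.
exact: is_interval_measurable.
Qed.

Lemma inv_meas (R : realType) : measurable_fun setT (@GRing.inv R).
Proof.
have -> : [set: R] = (`]-oo, 0[ `|` [set 0]) `|` `]0, +oo[.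
  apply/seteqP; split => // x _ /=; rewrite !in_itv /= andbT.
  by case: (ltgtP x 0) => [xlt|xgt|->]; [left; left|right|left; right].
apply/measurable_funU => //.
  apply: measurableU => //.
split; first apply/measurable_funU => //; first split.
- apply: sublevel_meas => // a x y [] /= + xa [] + ya z /andP[xz zy].
  move=> x0 y0; rewrite !in_itv /= in x0 y0 xa ya *.
  have z0 : z < 0 by exact: (le_lt_trans zy).
  split => //; apply: le_lt_trans xa.
  by rewrite lef_nV2 // negrE.
- exact: measurable_fun_set1.
- apply: sublevel_meas => // a x y [] /= + xa [] + ya z /andP[xz zy].
  move=> x0 y0; rewrite !in_itv /= ?andbT in x0 y0 xa ya *.
  have z0 : 0 < z by exact: (lt_le_trans x0).
  split => //; apply: le_lt_trans xa.
  by rewrite lef_pV2.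
Qed.
Lemma le_integral_meas d (T : measurableType d) (R : realType)
  (mu : {measure set T -> \bar R}) (D : set T) (f g : T -> \bar R) :
  measurable D -> measurable_fun D f -> measurable_fun D g ->
  (forall x, D x -> (f x <= g x)%E) ->
  (\int[mu]_(x in D) f x <= \int[mu]_(x in D) g x)%E.
Proof.
move=> mD mf mg fg; rewrite integralE [leRHS]integralE leeB//.
- apply: ge0_le_integral => //.
  + exact: measurable_funepos.
  + exact: measurable_funepos.
  + by move=> x /mem_set; apply: funepos_le => y /set_mem; exact: fg.
- apply: ge0_le_integral => //.
  + exact: measurable_funeneg.
  + exact: measurable_funeneg.
  + by move=> x /mem_set; apply: funeneg_le => y /set_mem; exact: fg.
Qed.

Lemma int_bounded d (T : measurableType d) (R : realType)
  (m : probability T R) (h : T -> R) (B : R) :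
  measurable_fun setT h -> (forall x, `|h x| <= B) ->
  m.-integrable setT (EFin \o h).
Proof.
move=> mh hB; apply: measurable_bounded_integrable => //.
  by rewrite -ge0_fin_numE ?measure_ge0 // fin_num_measure.
exists B; split; first exact: num_real.
move=> M hM x _ /=; exact: (le_trans (hB x) (ltW hM)).
Qed.

Lemma int_cst d (T : measurableType d) (R : realType)
  (m : probability T R) (a : R) :
  (\int[m]_x (a%:E) = a%:E)%E.
Proof. rewrite -[X in (X = _)%E]/(\int[m]_x (cst a%:E x))%E integral_cst //.
have h : ((m : {measure set T -> \bar R}) setT = 1)%E := probability_setT m.
by rewrite h mule1.
Qed.

Lemma int_indic d (T : measurableType d) (R : realType)
  (m : probability T R) (A : set T) (c : R) : measurable A ->
  (\int[m]_x ((c * \1_A x)%:E) = c%:E * m A)%E.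
Proof.
move=> mA; under eq_integral do rewrite EFinM.
rewrite integralZl //; last exact: integrable_indic.
by rewrite integral_indic // setIT.
Qed.
Lemma convex_le (R : realType) (psi : R -> R) :
  convex_function (`[0, +oo[%classic : set R^o) (psi : R^o -> R^o) ->
  forall x y (t : R), 0 <= t -> t <= 1 -> 0 <= x -> 0 <= y ->
  psi (t * x + (1 - t) * y) <= t * psi x + (1 - t) * psi y.
Proof.
move=> H x y t t0 t1 x0 y0.
have := H (Itv01 t0 t1) x y.
rewrite !convRE /=.
apply.
- by rewrite inE /= in_itv /= andbT.
- by rewrite inE /= in_itv /= andbT.
Qed.

Theorem proposition1 (d : measure_display) (X : measurableType d) (R : realType)
  (mu : {measure set X -> \bar R}) (P Q : probability X R) (f g : X -> R) (rho : R) :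
  measurable_fun setT f -> measurable_fun setT g ->
  (forall x, 0 <= f x) -> (forall x, 0 <= g x) ->
  (forall A, measurable A -> P A = (\int[mu]_(x in A) (f x)%:E)%E) ->
  (forall A, measurable A -> Q A = (\int[mu]_(x in A) (g x)%:E)%E) ->
  1 <= rho ->
  (forall x, (dratio (g x) (f x) <= rho%:E)%E) ->
  (* (a) *)
  (forall psi : R -> R,
     {in `[0, +oo[ &, {homo psi : s t / s <= t}} -> psi 1 = 0 ->
     (\int[Q]_x (psi (fine (dratio (g x) (f x))))%:E
        <= Q [set x | (f x < g x)%R] * (psi rho)%:E)%E) /\
  (* (b) *)
  (forall psi : R -> R,
     convex_function (`[0, +oo[%classic : set R^o) (psi : R^o -> R^o) ->
     (\int[P]_x (psi (fine (dratio (g x) (f x))))%:E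
        <= (psi 0 + (psi rho - psi 0) / rho)%:E)%E) /\
  (* equality case *)
  ((forall x, dratio (g x) (f x) = 0%E \/ dratio (g x) (f x) = rho%:E) ->
   (forall psi : R -> R,
      {in `[0, +oo[ &, {homo psi : s t / s <= t}} -> psi 1 = 0 ->
      (\int[Q]_x (psi (fine (dratio (g x) (f x))))%:E
         = Q [set x | (f x < g x)%R] * (psi rho)%:E)%E) /\
   (forall psi : R -> R,
      convex_function (`[0, +oo[%classic : set R^o) (psi : R^o -> R^o) ->
      (\int[P]_x (psi (fine (dratio (g x) (f x))))%:E
         = (psi 0 + (psi rho - psi 0) / rho)%:E)%E)).
Proof.
move=> mf mg f0 g0 hP hQ rho1 hrho.
have rho0 : 0 < rho by apply: lt_le_trans rho1.
have fg0 x : f x = 0 -> g x = 0.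
  move=> fx0; move: (hrho x); rewrite /dratio fx0 eqxx.
  by case: eqP => // _; rewrite leye_eq.
pose r x := g x / f x.
have hfine x : fine (dratio (g x) (f x)) = r x.
  rewrite /dratio /r; case: eqP => [fx0|//].
  by rewrite (fg0 _ fx0) eqxx fx0 invr0 mulr0.
have r0 x : 0 <= r x by rewrite /r divr_ge0.
have rrho x : r x <= rho.
  move: (hrho x); rewrite /dratio /r; case: eqP => [fx0|_]; last by rewrite lee_fin.
  by rewrite (fg0 _ fx0) fx0 invr0 mulr0 => _; exact: ltW.
have mr : measurable_fun setT r.
  apply: measurable_funM => //; apply: measurableT_comp => //; exact: inv_meas.
have E1 (m : probability X R) (psi : R -> R) :
    (\int[m]_x (psi (fine (dratio (g x) (f x))))%:E = \int[m]_x (psi (r x))%:E)%E.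
  by apply: eq_integral => x _; rewrite hfine.
have Q1 : ((Q : {measure set X -> \bar R}) setT = 1)%E := probability_setT Q.
have intr : (\int[P]_x (r x)%:E = 1)%E.
  have r0' x : (0 <= (r x)%:E)%E by rewrite lee_fin.
  have mr' : measurable_fun setT (fun x => (r x)%:E) by exact/measurable_EFinP.
  rewrite -(@density_integral _ _ _ mu P f mf f0 hP (fun x => (r x)%:E) setT r0' measurableT mr').
  transitivity (\int[mu]_x (g x)%:E)%E.
    apply: eq_integral => x _; rewrite -EFinM /r; congr EFin.
    have [fx0|fx0] := eqVneq (f x) 0; first by rewrite fx0 (fg0 _ fx0) !mul0r.
    by rewrite divfK.
  by rewrite -hQ.
have aff (a b : R) : (\int[P]_x (a + b * r x)%:E = (a + b)%:E)%E.
  under eq_integral do rewrite EFinD EFinM.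
  rewrite integralD //; last 2 first.
  - exact: (@int_bounded _ _ _ P (cst a) `|a|).
  - apply: integrableZl => //; apply: (@int_bounded _ _ _ P r rho) => // x.
    by rewrite ger0_norm.
  by rewrite int_cst integralZl ?intr ?mule1 //; apply: (@int_bounded _ _ _ P r rho) => // x; rewrite ger0_norm.
have rle1 x : g x <= f x -> r x <= 1.
  move=> gf; rewrite /r; have [fx0|fx0] := eqVneq (f x) 0.
    by rewrite fx0 invr0 mulr0.
  by rewrite ler_pdivrMr ?mul1r // lt_neqAle eq_sym fx0 f0.
have mA : measurable [set x | f x < g x].
  rewrite (_ : [set x | f x < g x] = [set: X] `&` (g \- f) @^-1` `]0, +oo[).
    by apply: measurable_funB => //; exact: measurable_itv.
  by apply/seteqP; split => x /=; rewrite in_itv /= andbT subr_gt0 => // -[].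
have itv0 z : 0 <= z -> z \in `[0, +oo[ by move=> z0; rewrite in_itv /= andbT.
have rho0' : 0 <= rho by exact: ltW.
split.
  move=> psi psi_nd psi1.
  rewrite E1.
  have mpsi0 : measurable_fun (`[0, +oo[%classic : set R) psi.
    apply: sublevel_meas => // a x y [/= + xa] [/= + ya] z /andP[xz zy].
    move=> x0 y0; rewrite !in_itv /= ?andbT in x0 y0 xa ya *.
    have z0 : 0 <= z by exact: le_trans xz.
    split => //; apply: le_lt_trans ya; apply: psi_nd => //; exact: itv0.
  have himg : r @` setT `<=` (`[0, +oo[%classic : set R).
    by move=> _ [x _ <-]; rewrite /= in_itv /= andbT.
  have mpsi : measurable_fun setT (fun x => psi (r x)).
    exact: (measurable_comp (measurable_itv _) himg mpsi0 mr).
  rewrite muleC -int_indic //.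
  apply: le_integral_meas => //.
  - exact/measurable_EFinP.
  - apply/measurable_EFinP; apply: measurable_funM => //; exact: measurable_indic.
  - move=> x _; rewrite lee_fin indicE; have [xA|xA] := boolP (x \in _).
      by rewrite mulr1; apply: psi_nd => //; exact: itv0.
    rewrite mulr0 -psi1; apply: psi_nd => //; try exact: itv0.
    by apply: rle1; move: xA; rewrite notin_setE /= => /negP; rewrite -leNgt.
split.
  move=> psi cpsi.
  rewrite E1.
  have cle z : 0 <= z -> z <= rho -> psi z <= psi 0 + (psi rho - psi 0) / rho * z.
    move=> z0 zr.
    have t0 : 0 <= z / rho by rewrite divr_ge0.
    have t1 : z / rho <= 1 by rewrite ler_pdivrMr // mul1r.
    have := @convex_le _ _ cpsi rho 0 (z / rho) t0 t1 rho0' (lexx 0).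
    rewrite mulr0 addr0 divfK ?gt_eqF //.
    move=> h; apply: (le_trans h); rewrite le_eqVlt; apply/orP; left; apply/eqP.
    ring.
  have mpsi0 : measurable_fun (`[0, +oo[%classic : set R) psi.
    apply: sublevel_meas => // a x y [/= + xa] [/= + ya] z /andP[xz zy].
    move=> x0 y0; rewrite !in_itv /= ?andbT in x0 y0 xa ya *.
    have z0 : 0 <= z by exact: le_trans xz.
    split => //.
    have [xy|xy] := eqVneq x y.
      by subst y; have -> : z = x by apply/le_anti; rewrite zy xz.
    have xy' : x < y by rewrite lt_neqAle xy (le_trans xz).
    pose t := (y - z) / (y - x).
    have yx0 : 0 < y - x by rewrite subr_gt0.
    have t0 : 0 <= t by apply: divr_ge0; [rewrite subr_ge0|exact: ltW].
    have t1 : t <= 1 by rewrite ler_pdivrMr // mul1r lerD2l lerN2.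
    have zE : z = t * x + (1 - t) * y.
      rewrite /t; field; by rewrite subr_eq0 eq_sym.
    have := @convex_le _ _ cpsi x y t t0 t1 x0 y0; rewrite -zE => h.
    apply: (le_lt_trans h).
    have [pxy|pxy] := leP (psi x) (psi y).
      have : t * psi x <= t * psi y by rewrite ler_wpM2l.
      lra.
    have : (1 - t) * psi y <= (1 - t) * psi x by rewrite ler_wpM2l ?subr_ge0 // ltW.
    lra.
  have himg : r @` setT `<=` (`[0, +oo[%classic : set R).
    by move=> _ [x _ <-]; rewrite /= in_itv /= andbT.
  have mpsi : measurable_fun setT (fun x => psi (r x)).
    exact: (measurable_comp (measurable_itv _) himg mpsi0 mr).
  rewrite -aff.
  apply: le_integral_meas => //.
  - exact/measurable_EFinP.
  - apply/measurable_EFinP; apply: measurable_funD => //; exact: measurable_funM.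
  - by move=> x _; rewrite lee_fin; apply: cle.
move=> H01.
have rcase x : r x = 0 \/ r x = rho.
  by case: (H01 x) => h; [left|right]; rewrite -hfine h.
split; last first.
  move=> psi cpsi; rewrite E1 -aff; apply: eq_integral => x _; congr EFin.
  case: (rcase x) => ->; first by rewrite mulr0 addr0.
  by rewrite divfK ?gt_eqF // addrC subrK.
move=> psi psi_nd psi1; rewrite E1.
have mB : measurable [set x | g x = 0].
  rewrite (_ : [set x | g x = 0] = [set: X] `&` g @^-1` [set 0]).
    by apply: mg => //; exact: measurable_set1.
  by apply/seteqP; split => x /=; [move=> ->|case].
have QB : Q [set x | g x = 0] = 0%E.
  rewrite hQ // (eq_integral (fun _ => 0%E)) ?integral0 // => x.
  by rewrite inE /= => ->.
have nb c (A : set X) x : `|c * \1_A x| <= `|c|.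
  rewrite normrM indicE; case: (x \in A); by rewrite ?normr1 ?normr0 ?mulr1 ?mulr0.
rewrite (eq_integral (fun x => (psi rho * \1_[set x | f x < g x] x)%:E
   + (psi 0 * \1_[set x | g x = 0] x)%:E)%E); last first.
  move=> x _; rewrite -EFinD; congr EFin; rewrite !indicE.
  case: (rcase x) => rx.
    have gx0 : g x = 0.
      move: rx; rewrite /r => /eqP; rewrite mulf_eq0 invr_eq0.
      by case/orP => /eqP // /fg0.
    rewrite rx (mem_set (gx0 : [set x | g x = 0] x)) memNset /=.
      by rewrite mulr0 add0r mulr1.
    by rewrite gx0 ltNge f0.
  have fx0 : f x != 0.
    by apply/eqP => fx0; move: rx; rewrite /r fx0 invr0 mulr0 => /esym/eqP; rewrite gt_eqF.
  have gE : g x = rho * f x by rewrite -rx /r divfK.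
  have fpos : 0 < f x by rewrite lt_neqAle eq_sym fx0 f0.
  have nB : ~ [set x | g x = 0] x.
    by rewrite /= gE => /eqP; rewrite mulf_eq0 (negbTE fx0) gt_eqF.
  rewrite rx (memNset nB) /=.
  rewrite mulr0 addr0.
  have [rho_1|rho_1] := eqVneq rho 1.
    by rewrite rho_1 psi1 mul0r.
  rewrite mem_set ?mulr1 //= gE -[X in X < _]mul1r ltr_pM2r //.
  by rewrite lt_neqAle eq_sym rho_1.
rewrite integralD //; last 2 first.
- apply: (@int_bounded _ _ _ Q _ `|psi rho|) => //.
  apply: measurable_funM => //; exact: measurable_indic.
- apply: (@int_bounded _ _ _ Q _ `|psi 0|) => //.
  apply: measurable_funM => //; exact: measurable_indic.
by rewrite !int_indic // QB mule0 adde0 muleC.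
Qed.
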